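(* For any hypothesis class $\mathcal{H}\subseteq\{0,1\}^{\mathcal{X}}$ and time horizon $T$, $$\inf_{\mathcal{A}}\operatorname{M}_{\mathcal{A}}(T,\mathcal{H}) \le \inf_{w\in\mathbb{N}}\Bigl\{\operatorname{AL}_w(\mathcal{H}) + 2\sqrt{(w-1)T}\Bigr\},$$ where the infimum on the left is over all (possibly randomized) online learners operating under apple tasting feedback.
   Context: Online binary classification: over rounds $t=1,\dots,T$, an adversary picks $(x_t,y_t)\in\mathcal{X}\times\{0,1\}$ and reveals $x_t$; the learner $\mathcal{A}$ (possibly randomized) outputs $\hat y_t=\mathcal{A}(x_t)\in\{0,1\}$ based on the history; under apple tasting feedback the learner observes $y_t$ only if $\hat y_t=1$. $\operatorname{M}_{\mathcal{A}}(T,\mathcal{H}) := \sup_{h\in\mathcal{H}}\sup_{x_1,\dots,x_T}\mathbb{E}\bigl[\sum_{t=1}^T \mathbb{1}\{\mathcal{A}(x_t)\neq h(x_t)\}\bigr]$ (labels $y_t=h(x_t)$, expectation over the learner's randomness). AL tree of width $w\in\mathbb{N}=\{1,2,\dots\}$ and depth $d$: a binary string $u$ is an internal node if $|u|<d$ and $u$ has fewer than $w$ ones; the tree assigns $x_u\in\mathcal{X}$ to each internal node. A path is a binary string $\sigma$ whose proper prefixes are all internal nodes but which is not itself one. The tree is shattered by $\mathcal{H}$ if for every path $\sigma$ some $h\in\mathcal{H}$ satisfies $h(x_{(\sigma_1,\dots,\sigma_{i-1})})=\sigma_i$ for all $i\le|\sigma|$. $\operatorname{AL}_w(\mathcal{H})$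 is the largest $d$ such that such a tree of width $w$ and depth $d$ is shattered ($\infty$ if unbounded, $0$ if none). *)

(* Defs.v *)
From Stdlib Require Import Reals List Arith.
Import ListNotations.
Open Scope R_scope.

Definition ones (u : list bool) : nat := count_occ Bool.bool_dec u true.

Definition internal (w d : nat) (u : list bool) : Prop :=
  (length u < d)%nat /\ (ones u < w)%nat.

Definition is_path (w d : nat) (sigma : list bool) : Prop :=
  (forall i, (i < length sigma)%nat -> internal w d (firstn i sigma))
  /\ ~ internal w d sigma.

(* An AL tree assigns x_u to each node u (only internal nodes matter).
   It is shattered by H if every path is realized by some h in H:
   h(x_{sigma_1..sigma_{i-1}}) = sigma_i for all i <= |sigma|. *)
Definition AL_shattered {X : Type} (H : (X -> bool) -> Prop)
    (w d : nat) (tr : list bool -> X) : Prop :=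
  forall sigma, is_path w d sigma ->
    exists h, H h /\
      forall i, (i < length sigma)%nat ->
        h (tr (firstn i sigma)) = nth i sigma false.

Definition AL_shatterable {X : Type} (H : (X -> bool) -> Prop) (w d : nat) : Prop :=
  exists tr : list bool -> X, AL_shattered H w d tr.

(* AL_w(H) <= d : every shattered tree of width w has depth at most d
   (AL_w(H) = infinity is never bounded; AL_w(H) = 0 if none is shattered) *)
Definition AL_le {X : Type} (H : (X -> bool) -> Prop) (w d : nat) : Prop :=
  forall d', AL_shatterable H w d' -> (d' <= d)%nat.

(* history entry: (x_s, prediction yhat_s, feedback) where the feedback is
   Some y_s if yhat_s = true and None otherwise (apple tasting). *)
Definition hist_entry (X : Type) : Type := (X * bool * option bool)%type.

(* A (behavioural) randomized learner: given the history so far and the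
   current instance x_t, the probability of predicting yhat_t = 1. *)
Definition Learner (X : Type) : Type := list (hist_entry X) -> X -> R.

Definition valid_learner {X : Type} (A : Learner X) : Prop :=
  forall hist x, 0 <= A hist x <= 1.

Fixpoint exp_mistakes {X : Type} (A : Learner X) (h : X -> bool)
    (hist : list (hist_entry X)) (xs : list X) : R :=
  match xs with
  | [] => 0
  | x :: xs' =>
      let p := A hist x in
      let y := h x in
      p * ((if y then 0 else 1)
           + exp_mistakes A h (hist ++ [(x, true, Some y)]) xs')
      + (1 - p) * ((if y then 1 else 0)
           + exp_mistakes A h (hist ++ [(x, false, None)]) xs')
  end.

Definition M_le {X : Type} (A : Learner X) (T : nat)
    (H : (X -> bool) -> Prop) (c : R) : Prop :=
  forall h, H h -> forall xs : list X, length xs = T ->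
    exp_mistakes A h [] xs <= c.

(* Main.v *)
Require Import Defs.
From Stdlib Require Import Reals List Arith.
From Stdlib Require Import Lra Lia ClassicalDescription.
Import ListNotations.
Open Scope R_scope.

Lemma ones_false u : ones (false::u) = ones u.
Proof. unfold ones. apply count_occ_cons_neq. discriminate. Qed.
Lemma ones_true u : ones (true::u) = S (ones u).
Proof. unfold ones. apply count_occ_cons_eq. reflexivity. Qed.

Lemma sh_sub {X} (V W : (X->bool)->Prop) k a :
  (forall h, V h -> W h) -> AL_shatterable V k a -> AL_shatterable W k a.
Proof.
  intros HVW [tr Htr]. exists tr. intros s Hs.
  destruct (Htr s Hs) as [h [Hh Hr]]. exists h. split; auto.
Qed.

Lemma sh_depth0 {X} (V : (X->bool)->Prop) k (x:X) h : V h -> AL_shatterable V k 0.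
Proof.
  intros Hh. exists (fun _ => x). intros s [Hp _]. exists h. split; auto.
  intros i Hi. destruct (Hp i Hi) as [H1 _]. lia.
Qed.

Lemma sh_width0 {X} (V : (X->bool)->Prop) a (x:X) h : V h -> AL_shatterable V 0 a.
Proof.
  intros Hh. exists (fun _ => x). intros s [Hp _]. exists h. split; auto.
  intros i Hi. destruct (Hp i Hi) as [_ H1]. lia.
Qed.

Lemma sh_comb {X} (V V0 V1 : (X->bool)->Prop) (x : X) k a :
  (1 <= k)%nat -> (forall h, V0 h -> V h /\ h x = false) ->
  (forall h, V1 h -> V h /\ h x = true) ->
  AL_shatterable V0 k a -> AL_shatterable V1 (k-1) a -> AL_shatterable V k (S a).
Proof.
  intros Hk H0 H1 [t0 Ht0] [t1 Ht1].
  exists (fun u => match u with [] => x | false :: u' => t0 u' | true :: u' => t1 u' end).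
  intros s [Hp Hn]. unfold internal in *.
  destruct s as [|b s'].
  - exfalso. apply Hn. unfold ones. simpl. lia.
  - destruct b.
    + assert (Hpath : is_path (k-1) a s').
      { split.
        - intros i Hi. unfold internal.
          destruct (Hp (S i) ltac:(simpl; lia)) as [A B].
          simpl in A, B. rewrite ones_true in B. split; lia.
        - intros [A B]. apply Hn. simpl. rewrite ones_true. split; lia. }
      destruct (Ht1 s' Hpath) as [g [Hg Hr]]. destruct (H1 g Hg) as [HgV Hgx].
      exists g. split; auto. intros i Hi. destruct i as [|i].
      * simpl. auto.
      * simpl. apply Hr. simpl in Hi. lia.
    + assert (Hpath : is_path k a s').
      { split.
        - intros i Hi. unfold internal.
          destruct (Hp (S i) ltac:(simpl; lia)) as [A B].
          simpl in A, B. rewrite ones_false in B. split; lia.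
        - intros [A B]. apply Hn. simpl. rewrite ones_false. split; lia. }
      destruct (Ht0 s' Hpath) as [g [Hg Hr]]. destruct (H0 g Hg) as [HgV Hgx].
      exists g. split; auto. intros i Hi. destruct i as [|i].
      * simpl. auto.
      * simpl. apply Hr. simpl in Hi. lia.
Qed.

Record st (X : Type) := mkst { sV : (X->bool)->Prop; sk : nat; sm : nat }.
Arguments mkst {X}. Arguments sV {X}. Arguments sk {X}. Arguments sm {X}.

Definition V0 {X} (s : st X) (x : X) := fun h : X -> bool => sV s h /\ h x = false.
Definition V1 {X} (s : st X) (x : X) := fun h : X -> bool => sV s h /\ h x = true.

Definition caseA {X} (s : st X) (x : X) : bool :=
  if excluded_middle_informative (AL_shatterable (V0 s x) (sk s) (sm s)) then false else true.

Lemma caseA_true {X} (s : st X) x : caseA s x = true -> ~ AL_shatterable (V0 s x) (sk s) (sm s).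
Proof. unfold caseA. destruct excluded_middle_informative; congruence. Qed.
Lemma caseA_false {X} (s : st X) x : caseA s x = false -> AL_shatterable (V0 s x) (sk s) (sm s).
Proof. unfold caseA. destruct excluded_middle_informative; congruence. Qed.

Definition step {X} (s : st X) (e : hist_entry X) : st X :=
  match e with
  | (x, _, Some true) =>
      if caseA s x then mkst (V1 s x) (sk s) (sm s)
      else mkst (V1 s x) (sk s - 1)%nat (sm s - 1)%nat
  | (x, _, Some false) =>
      if caseA s x then mkst (V0 s x) (sk s) (sm s - 1)%nat
      else mkst (V0 s x) (sk s) (sm s)
  | (_, _, None) => s
  end.

Definition state {X} (s0 : st X) (hist : list (hist_entry X)) := fold_left step hist s0.

Lemma state_app {X} (s0 : st X) (hist : list (hist_entry X)) (e : (X * bool * option bool)%type) : state s0 (@app (hist_entry X) hist (@cons (X * bool * option bool)%type e nil)) = step (state s0 hist) e.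
Proof. unfold state. rewrite fold_left_app. reflexivity. Qed.

Definition learner {X} (s0 : st X) (p : R) : Learner X :=
  fun hist x => if caseA (state s0 hist) x then 1 else p.

Definition Inv {X} (h : X -> bool) (s : st X) :=
  sV s h /\ ~ AL_shatterable (sV s) (sk s) (S (sm s)) /\ (1 <= sk s)%nat.

Lemma arithB p c M N K Et Ef : 0 < p <= 1 -> c = (1-p)/p ->
  Et <= M - 1 + p * N + c * (K - 1 - 1) -> Ef <= M + p * N + c * (K - 1) ->
  p * (0 + Et) + (1 - p) * (1 + Ef) <= M + p * (N + 1) + c * (K - 1).
Proof.
  intros Hp Hc H1 H2.
  assert (A1 : p * Et <= p * (M - 1 + p * N + c * (K - 1 - 1))) by (apply Rmult_le_compat_l; lra).
  assert (A2 : (1-p) * Ef <= (1-p) * (M + p * N + c * (K - 1))) by (apply Rmult_le_compat_l; lra).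
  assert (E : p * (M - 1 + p * N + c * (K - 1 - 1)) + (1-p) * (1 + (M + p * N + c * (K - 1)))
              = M + p * N + c * (K - 1) - p) by (subst c; field; lra).
  lra.
Qed.

Lemma main {X} (s0 : st X) p h : 0 < p <= 1 -> forall xs hist, Inv h (state s0 hist) ->
  exp_mistakes (learner s0 p) h hist xs <=
  INR (sm (state s0 hist)) + p * INR (length xs) + (1-p)/p * (INR (sk (state s0 hist)) - 1).
Proof.
  intros Hp. set (c := (1-p)/p).
  assert (Hc : 0 <= c) by (unfold c; apply Rmult_le_pos; [lra | left; apply Rinv_0_lt_compat; lra]).
  induction xs as [|x xs IH]; intros hist Hinv.
  - simpl. destruct Hinv as [_ [_ Hk]]. apply le_INR in Hk. simpl in Hk.
    pose proof (pos_INR (sm (state s0 hist))).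
    assert (0 <= c * (INR (sk (state s0 hist)) - 1)) by (apply Rmult_le_pos; lra). lra.
  - cbn [exp_mistakes length]. rewrite S_INR.
    pose proof (IH (hist ++ [(x, true, Some (h x))])) as IHt.
    pose proof (IH (hist ++ [(x, false, None)])) as IHf.
    rewrite state_app in IHt, IHf. cbn [step] in IHf.
    specialize (IHf Hinv).
    change (learner s0 p hist x) with (if caseA (state s0 hist) x then 1 else p). set (s := state s0 hist) in *.
    destruct Hinv as [Hh [Hns Hk]].
    destruct (caseA s x) eqn:HA; destruct (h x) eqn:Hx.
    +
      cbn [step] in IHt. rewrite HA in IHt. simpl in IHt.
      assert (I : Inv h (mkst (V1 s x) (sk s) (sm s))).
      { split; [split; auto|split; [|exact Hk]].
        intro Hs. apply Hns. apply (sh_sub (V1 s x)); [|exact Hs]. intros g [? ?]; auto. }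
      specialize (IHt I). simpl in IHt.
      assert (0 <= p * INR (length xs)) by (apply Rmult_le_pos; [lra|apply pos_INR]).
      lra.
    +
      cbn [step] in IHt. rewrite HA in IHt.
      pose proof (caseA_true _ _ HA) as HA'.
      destruct (sm s) as [|m'] eqn:Hm.
      { exfalso. apply HA'. apply (sh_depth0 _ _ x h). split; auto. }
      assert (I : Inv h (mkst (V0 s x) (sk s) (S m' - 1))).
      { split; [split; auto|split; [|exact Hk]]. simpl. replace (m' - 0)%nat with m' by lia. exact HA'. }
      specialize (IHt I). simpl in IHt. replace (m' - 0)%nat with m' in IHt by lia.
      rewrite S_INR. lra.
    +
      cbn [step] in IHt. rewrite HA in IHt.
      pose proof (caseA_false _ _ HA) as HA'.
      assert (HB : ~ AL_shatterable (V1 s x) (sk s - 1) (sm s)).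
      { intro HS. apply Hns. apply (sh_comb _ (V0 s x) (V1 s x) x); auto; intros g [? ?]; auto. }
      assert (Hk2 : (2 <= sk s)%nat).
      { destruct (sk s) as [|[|k]] eqn:E; try lia. exfalso. apply HB. simpl.
        apply (sh_width0 _ _ x h). split; auto. }
      destruct (sm s) as [|m'] eqn:Hm.
      { exfalso. apply HB. apply (sh_depth0 _ _ x h). split; auto. }
      assert (I : Inv h (mkst (V1 s x) (sk s - 1) (S m' - 1))).
      { split; [split; auto|split; [|simpl; lia]]. simpl. replace (m' - 0)%nat with m' by lia. exact HB. }
      specialize (IHt I). simpl in IHt. replace (m' - 0)%nat with m' in IHt by lia.
      rewrite minus_INR in IHt by lia. simpl in IHt. rewrite S_INR.
      fold c in IHt, IHf |- *.
      apply (arithB p c (INR m' + 1) (INR (length xs)) (INR (sk s))); auto.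
      rewrite S_INR in IHf. lra. rewrite S_INR in IHf. lra.
    +
      cbn [step] in IHt. rewrite HA in IHt.
      assert (I : Inv h (mkst (V0 s x) (sk s) (sm s))).
      { split; [split; auto|split; [|exact Hk]].
        intro Hs. apply Hns. apply (sh_sub (V0 s x)); [|exact Hs]. intros g [? ?]; auto. }
      specialize (IHt I). simpl in IHt. fold c in IHt, IHf |- *.
      assert (A1 : p * (1 + exp_mistakes (learner s0 p) h (hist ++ [(x, true, Some false)]) xs)
                   <= p * (1 + (INR (sm s) + p * INR (length xs) + c * (INR (sk s) - 1))))
        by (apply Rmult_le_compat_l; lra).
      assert (A2 : (1 - p) * (0 + exp_mistakes (learner s0 p) h (hist ++ [(x, false, None)]) xs)
                   <= (1 - p) * (0 + (INR (sm s) + p * INR (length xs) + c * (INR (sk s) - 1))))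
        by (apply Rmult_le_compat_l; lra).
      lra.
Qed.

Theorem lemma2 (X : Type) (H : (X -> bool) -> Prop) (T w d : nat) :
  (1 <= w)%nat -> AL_le H w d ->
  forall eps : R, 0 < eps ->
  exists A : Learner X, valid_learner A /\
    M_le A T H (INR d + 2 * sqrt ((INR w - 1) * INR T) + eps).
Proof.
  intros Hw Hal eps Heps.
  set (a := INR w - 1). set (s := sqrt (a * INR T)). set (e := eps / 2).
  assert (Ha : 0 <= a) by (unfold a; apply le_INR in Hw; simpl in Hw; lra).
  assert (HT : 0 <= INR T) by apply pos_INR.
  assert (Hs : 0 <= s) by apply sqrt_pos.
  assert (Hss : s * s = a * INR T) by (apply sqrt_sqrt; apply Rmult_le_pos; lra).
  set (p := if Rle_dec (INR T) (s + e) then 1 else (s + e) / INR T).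
  assert (Hp : 0 < p <= 1 /\ p * INR T + (1-p)/p * a <= 2 * s + eps).
  { unfold p. destruct (Rle_dec (INR T) (s + e)) as [Hle|Hgt].
    - split; [lra|]. unfold e in *. replace ((1-1)/1) with 0 by field. lra.
    - assert (HT' : 0 < INR T) by (unfold e in *; lra).
      assert (Hse : 0 < s + e) by (unfold e; lra).
      split; [split|].
      + apply Rdiv_lt_0_compat; lra.
      + apply Rmult_le_reg_r with (INR T); [lra|]. unfold Rdiv. rewrite Rmult_assoc, Rinv_l; lra.
      + replace ((s + e) / INR T * INR T) with (s + e) by (field; lra).
        replace ((1 - (s + e) / INR T) / ((s + e) / INR T) * a)
          with (a * INR T / (s + e) - a) by (field; lra).
        assert (a * INR T / (s + e) <= s).
        { apply Rmult_le_reg_r with (s + e); [lra|].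
          unfold Rdiv. rewrite Rmult_assoc, Rinv_l by lra.
          assert (0 <= s * e) by (apply Rmult_le_pos; unfold e; lra). nra. }
        unfold e in *. lra. }
  destruct Hp as [Hp Hbound].
  exists (learner (mkst H w d) p). split.
  - intros hist x. unfold learner. destruct caseA; lra.
  - intros h Hh xs Hlen.
    assert (I : Inv h (state (mkst H w d) [])).
    { split; [exact Hh|split; [|exact Hw]]. intro HS. simpl in HS. apply Hal in HS. lia. }
    eapply Rle_trans; [apply (main _ p h Hp xs [] I)|].
    simpl. rewrite Hlen. fold a. lra.
Qed.
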